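(* Assume that MSCQ holds for the system $G(z)\in K$ at $\bar z$, and let $v\in Z$ satisfy $\nabla G(\bar z)v\in K$. Then there is $\kappa>0$ with the following property. For every pair $(w,q)\in Z\times E$ with $$\nabla G(\bar z)w+\tfrac12\nabla^2G(\bar z)(v,v)+q\in T_K(\nabla G(\bar z)v)$$ there exists $\widetilde w\in Z$ such that $$\nabla G(\bar z)\widetilde w+\tfrac12\nabla^2G(\bar z)(v,v)\in T_K(\nabla G(\bar z)v)\quad\text{and}\quad \|\widetilde w-w\|\le\kappa\|q\|.$$ Equivalently, the mapping $\Theta\colon E\rightrightarrows Z$ defined by $\Theta(q):=\{w:\nabla G(\bar z)w+\frac12\nabla^2G(\bar z)(v,v)+q\in T_K(\nabla G(\bar z)v)\}$ satisfies $\Theta(q)\subset\Theta(0)+\kappa\|q\|{\cal B}_Z$ for all $q\in E$.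
   Context: Setting: $Z$ and $E$ are finite-dimensional spaces, $\bar z\in Z$, and $K\subset E$ is a closed convex cone. The map $G\colon Z\to E$ is $C^2$-smooth around $\bar z$ with $G(\bar z)=0$. (In the paper $Z=P\times X$ and $G=h\circ g$ is the reduction mapping of a $C^2$-cone reducible constraint system.) $\nabla^2G(\bar z)(v,v)$ is the second derivative of $G$ at $\bar z$ evaluated at $(v,v)$. For a closed set $\Omega$ and $\bar y\in\Omega$, the tangent cone is $T_\Omega(\bar y):=\{w:\exists\, t_k\downarrow0,\ w_k\to w \text{ with } \bar y+t_kw_k\in\Omega\}$. The system $G(z)\in K$ satisfies MSCQ at $\bar z$ if there is $\kappa'\ge0$ such that ${\rm dist}(z;G^{-1}(K))\le\kappa'\,{\rm dist}(G(z);K)$ for all $z$ near $\bar z$. ${\cal B}_Z$ is the closed unit ball. *)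

(* Defs.v *)
(* classical reals. Z = R^n, E = R^m in coordinates. *)
From Stdlib Require Import Reals Lra.
From Stdlib Require Vectors.Fin.
Open Scope R_scope.

Definition Vec (n : nat) : Type := Fin.t n -> R.

Fixpoint fsum (n : nat) : (Fin.t n -> R) -> R :=
  match n return (Fin.t n -> R) -> R with
  | O => fun _ => 0
  | S k => fun f => f Fin.F1 + fsum k (fun i => f (Fin.FS i))
  end.

Definition vzero (n : nat) : Vec n := fun _ => 0.
Definition vadd {n : nat} (x y : Vec n) : Vec n := fun i => x i + y i.
Definition vopp {n : nat} (x : Vec n) : Vec n := fun i => - x i.
Definition vsub {n : nat} (x y : Vec n) : Vec n := fun i => x i - y i.
Definition vscal {n : nat} (a : R) (x : Vec n) : Vec n := fun i => a * x i.

Definition vnorm {n : nat} (x : Vec n) : R := sqrt (fsum n (fun i => x i * x i)).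

Definition is_glb (S : R -> Prop) (d : R) : Prop :=
  (forall r, S r -> d <= r) /\ (forall b, (forall r, S r -> b <= r) -> b <= d).

Definition is_dist {n : nat} (S : Vec n -> Prop) (x : Vec n) (d : R) : Prop :=
  is_glb (fun r => exists s, S s /\ r = vnorm (vsub x s)) d.

Definition closed_set {n : nat} (S : Vec n -> Prop) : Prop :=
  forall x, (forall eps, 0 < eps -> exists y, S y /\ vnorm (vsub x y) < eps) -> S x.
Definition convex_set {n : nat} (S : Vec n -> Prop) : Prop :=
  forall x y t, S x -> S y -> 0 <= t <= 1 ->
    S (vadd (vscal t x) (vscal (1 - t) y)).
Definition cone_set {n : nat} (S : Vec n -> Prop) : Prop :=
  forall x t, S x -> 0 <= t -> S (vscal t x).
Definition closed_convex_cone {n : nat} (S : Vec n -> Prop) : Prop :=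
  closed_set S /\ convex_set S /\ cone_set S.

Definition tangent_cone {n : nat} (Om : Vec n -> Prop) (ybar w : Vec n) : Prop :=
  exists (t : nat -> R) (wk : nat -> Vec n),
    (forall k, 0 < t k) /\ Un_cv t 0 /\
    (forall eps, 0 < eps -> exists N, forall k, (k >= N)%nat -> vnorm (vsub (wk k) w) < eps) /\
    (forall k, Om (vadd ybar (vscal (t k) (wk k)))).

Definition is_linear {n m : nat} (A : Vec n -> Vec m) : Prop :=
  forall x y a b, A (vadd (vscal a x) (vscal b y)) = vadd (vscal a (A x)) (vscal b (A y)).
Definition is_bilinear {n m : nat} (B : Vec n -> Vec n -> Vec m) : Prop :=
  (forall u, is_linear (fun h => B h u)) /\ (forall h, is_linear (B h)).

Definition frechet_deriv {n m : nat} (f : Vec n -> Vec m) (A : Vec n -> Vec m) (x : Vec n) : Prop :=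
  is_linear A /\
  forall eps, 0 < eps -> exists delta, 0 < delta /\
    forall h, vnorm h < delta ->
      vnorm (vsub (vsub (f (vadd x h)) (f x)) (A h)) <= eps * vnorm h.

(** [B] is the Fréchet derivative at [x] of the map [Df : Z -> L(Z,E)]
    (with the operator norm on L(Z,E)). *)
Definition frechet_deriv2 {n m : nat} (Df : Vec n -> Vec n -> Vec m)
    (B : Vec n -> Vec n -> Vec m) (x : Vec n) : Prop :=
  is_bilinear B /\
  forall eps, 0 < eps -> exists delta, 0 < delta /\
    forall h, vnorm h < delta -> forall u,
      vnorm (vsub (vsub (Df (vadd x h) u) (Df x u)) (B h u)) <= eps * vnorm h * vnorm u.

Definition cont_bilin_at {n m : nat} (D2f : Vec n -> Vec n -> Vec n -> Vec m) (x : Vec n) : Prop :=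
  forall eps, 0 < eps -> exists delta, 0 < delta /\
    forall y, vnorm (vsub y x) < delta -> forall h u,
      vnorm (vsub (D2f y h u) (D2f x h u)) <= eps * vnorm h * vnorm u.

Definition C2_around {n m : nat} (G : Vec n -> Vec m) (DG : Vec n -> Vec n -> Vec m)
    (D2G : Vec n -> Vec n -> Vec n -> Vec m) (zbar : Vec n) : Prop :=
  exists r, 0 < r /\ forall z, vnorm (vsub z zbar) < r ->
    frechet_deriv G (DG z) z /\ frechet_deriv2 DG (D2G z) z /\ cont_bilin_at D2G z.

Definition MSCQ {n m : nat} (G : Vec n -> Vec m) (K : Vec m -> Prop) (zbar : Vec n) : Prop :=
  exists kappa', 0 <= kappa' /\ exists delta, 0 < delta /\
    forall z, vnorm (vsub z zbar) < delta ->
      forall d1 d2, is_dist (fun z' => K (G z')) z d1 -> is_dist K (G z) d2 ->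
        d1 <= kappa' * d2.

(* Main.v *)
Require Import Defs.
From Stdlib Require Import Reals.
From Stdlib Require Import Lra Lia FunctionalExtensionality Rtopology ClassicalEpsilon Classical.
From Stdlib Require Vectors.Fin.
From Coquelicot Require Coquelicot.
Open Scope R_scope.

Lemma fsum_ext n (f g : Fin.t n -> R) : (forall i, f i = g i) -> fsum n f = fsum n g.
Proof.
  revert f g; induction n; simpl; intros f g H; [reflexivity|].
  rewrite H, (IHn (fun i => f (Fin.FS i)) (fun i => g (Fin.FS i))); auto.
Qed.

Lemma fsum_plus n (f g : Fin.t n -> R) : fsum n (fun i => f i + g i) = fsum n f + fsum n g.
Proof.
  revert f g; induction n; simpl; intros f g; [ring|].
  rewrite (IHn (fun i => f (Fin.FS i)) (fun i => g (Fin.FS i))); ring.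
Qed.

Lemma fsum_scal n c (f : Fin.t n -> R) : fsum n (fun i => c * f i) = c * fsum n f.
Proof.
  revert f; induction n; simpl; intros f; [ring|].
  rewrite (IHn (fun i => f (Fin.FS i))); ring.
Qed.

Lemma fsum_le n (f g : Fin.t n -> R) : (forall i, f i <= g i) -> fsum n f <= fsum n g.
Proof.
  revert f g; induction n; simpl; intros f g H; [lra|].
  specialize (IHn (fun i => f (Fin.FS i)) (fun i => g (Fin.FS i))).
  assert (forall i, f (Fin.FS i) <= g (Fin.FS i)) by auto.
  specialize (IHn H0). specialize (H Fin.F1). lra.
Qed.

Lemma fsum_const n c : fsum n (fun _ => c) = INR n * c.
Proof. induction n; simpl fsum; [simpl; ring|]. rewrite IHn, S_INR; ring. Qed.

Lemma fsum_nonneg n (f : Fin.t n -> R) : (forall i, 0 <= f i) -> 0 <= fsum n f.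
Proof.
  intros H. pose proof (fsum_le n (fun _ => 0) f H). rewrite fsum_const in H0. lra.
Qed.

Lemma fsum_ge_term n (f : Fin.t n -> R) : (forall i, 0 <= f i) -> forall i, f i <= fsum n f.
Proof.
  revert f; induction n; intros f H i; [inversion i|].
  simpl. pattern i; apply Fin.caseS'.
  - pose proof (fsum_nonneg n (fun i => f (Fin.FS i)) (fun i => H (Fin.FS i))). lra.
  - intros p. pose proof (H Fin.F1).
    pose proof (IHn (fun i => f (Fin.FS i)) (fun i => H (Fin.FS i)) p). simpl in H1. lra.
Qed.

Lemma fsum_sq_le n (f : Fin.t n -> R) :
  fsum n (fun i => f i * f i) <= (fsum n (fun i => Rabs (f i))) ^ 2.
Proof.
  revert f; induction n; intros f; simpl; [lra|].
  specialize (IHn (fun i => f (Fin.FS i))).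
  pose proof (fsum_nonneg n (fun i => Rabs (f (Fin.FS i))) (fun i => Rabs_pos _)).
  pose proof (Rabs_pos (f Fin.F1)).
  assert (f Fin.F1 * f Fin.F1 = Rabs (f Fin.F1) * Rabs (f Fin.F1)).
  { rewrite <- Rabs_mult. rewrite Rabs_right; [ring|]. apply Rle_ge, Rle_0_sqr. }
  simpl in IHn. nra.
Qed.

Definition N1 {n} (x : Vec n) : R := fsum n (fun i => Rabs (x i)).

Lemma vec_ext {n} (x y : Vec n) : (forall i, x i = y i) -> x = y.
Proof. intros; apply functional_extensionality; auto. Qed.

Lemma N1_nonneg {n} (x : Vec n) : 0 <= N1 x.
Proof. apply fsum_nonneg; intros; apply Rabs_pos. Qed.

Lemma N1_add {n} (x y : Vec n) : N1 (vadd x y) <= N1 x + N1 y.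
Proof.
  unfold N1, vadd. rewrite <- fsum_plus. apply fsum_le; intros; apply Rabs_triang.
Qed.

Lemma N1_scal {n} a (x : Vec n) : N1 (vscal a x) = Rabs a * N1 x.
Proof.
  unfold N1, vscal. rewrite <- fsum_scal. apply fsum_ext; intros; apply Rabs_mult.
Qed.

Lemma N1_opp {n} (x : Vec n) : N1 (vopp x) = N1 x.
Proof. unfold N1, vopp. apply fsum_ext; intros; apply Rabs_Ropp. Qed.

Lemma N1_sub {n} (x y : Vec n) : N1 (vsub x y) <= N1 x + N1 y.
Proof.
  replace (vsub x y) with (vadd x (vopp y)) by (apply vec_ext; intro; unfold vsub, vadd, vopp; ring).
  rewrite <- (N1_opp y). apply N1_add.
Qed.

Lemma N1_sub_sym {n} (x y : Vec n) : N1 (vsub x y) = N1 (vsub y x).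
Proof. unfold N1, vsub. apply fsum_ext; intros; apply Rabs_minus_sym. Qed.

Lemma coord_le_N1 {n} (x : Vec n) i : Rabs (x i) <= N1 x.
Proof. apply (fsum_ge_term n (fun i => Rabs (x i))); intros; apply Rabs_pos. Qed.

Lemma vnorm_nonneg {n} (x : Vec n) : 0 <= vnorm x.
Proof. apply sqrt_pos. Qed.

Lemma vnorm_le_N1 {n} (x : Vec n) : vnorm x <= N1 x.
Proof.
  unfold vnorm. rewrite <- (sqrt_pow2 (N1 x)) by apply N1_nonneg.
  apply sqrt_le_1_alt. apply fsum_sq_le.
Qed.

Lemma coord_le_vnorm {n} (x : Vec n) i : Rabs (x i) <= vnorm x.
Proof.
  unfold vnorm. rewrite <- sqrt_Rsqr_abs. apply sqrt_le_1_alt.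
  unfold Rsqr. apply (fsum_ge_term n (fun i => x i * x i)). intros; apply Rle_0_sqr.
Qed.

Lemma N1_le_vnorm {n} (x : Vec n) : N1 x <= INR n * vnorm x.
Proof.
  rewrite <- fsum_const. apply fsum_le. intros; apply coord_le_vnorm.
Qed.

Lemma vnorm_scal {n} a (x : Vec n) : vnorm (vscal a x) = Rabs a * vnorm x.
Proof.
  unfold vnorm, vscal.
  rewrite (fsum_ext n _ (fun i => (a*a) * (x i * x i))) by (intros; ring).
  rewrite fsum_scal, sqrt_mult_alt by apply Rle_0_sqr.
  rewrite sqrt_square_abs_aux || idtac. f_equal.
  rewrite <- sqrt_Rsqr_abs. reflexivity.
Qed.

Lemma lin_add {n m} (A : Vec n -> Vec m) : is_linear A -> forall x y, A (vadd x y) = vadd (A x) (A y).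
Proof.
  intros HA x y. pose proof (HA x y 1 1).
  replace (vadd (vscal 1 x) (vscal 1 y)) with (vadd x y) in H
    by (apply vec_ext; intro; unfold vadd, vscal; ring).
  rewrite H. apply vec_ext; intro; unfold vadd, vscal; ring.
Qed.

Lemma lin_scal {n m} (A : Vec n -> Vec m) : is_linear A -> forall a x, A (vscal a x) = vscal a (A x).
Proof.
  intros HA a x. pose proof (HA x x a 0).
  replace (vadd (vscal a x) (vscal 0 x)) with (vscal a x) in H
    by (apply vec_ext; intro; unfold vadd, vscal; ring).
  rewrite H. apply vec_ext; intro; unfold vadd, vscal; ring.
Qed.

Lemma lin_sub {n m} (A : Vec n -> Vec m) : is_linear A -> forall x y, A (vsub x y) = vsub (A x) (A y).
Proof.
  intros HA x y. pose proof (HA x y 1 (-1)).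
  replace (vadd (vscal 1 x) (vscal (-1) y)) with (vsub x y) in H
    by (apply vec_ext; intro; unfold vadd, vsub, vscal; ring).
  rewrite H. apply vec_ext; intro; unfold vadd, vsub, vscal; ring.
Qed.

Definition vcons {n} (a : R) (y : Vec n) : Vec (S n) :=
  fun i => Fin.caseS' i (fun _ => R) a y.

Lemma vec0_eq (x : Vec 0) : x = vscal 0 x.
Proof. apply vec_ext; intro i; inversion i. Qed.

Lemma vec_decomp {n} (x : Vec (S n)) :
  x = vadd (vscal (x Fin.F1) (vcons 1 (vzero n))) (vcons 0 (fun i => x (Fin.FS i))).
Proof.
  apply vec_ext; intro i; pattern i; apply Fin.caseS'; unfold vadd, vscal, vcons, vzero; simpl;
  intros; ring.
Qed.

Lemma vcons_lin {n} a b (x y : Vec n) :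
  vcons 0 (vadd (vscal a x) (vscal b y)) = vadd (vscal a (vcons 0 x)) (vscal b (vcons 0 y)).
Proof.
  apply vec_ext; intro i; pattern i; apply Fin.caseS'; unfold vadd, vscal, vcons; simpl;
  intros; ring.
Qed.

Lemma N1_vcons0 {n} (y : Vec n) : N1 (vcons 0 y) = N1 y.
Proof. unfold N1; simpl. rewrite Rabs_R0. ring. Qed.

Lemma N1_S {n} (x : Vec (S n)) : N1 x = Rabs (x Fin.F1) + N1 (fun i => x (Fin.FS i)).
Proof. reflexivity. Qed.

Lemma lin_bound n m (A : Vec n -> Vec m) : is_linear A ->
  exists M, 0 <= M /\ forall x, N1 (A x) <= M * N1 x.
Proof.
  revert A; induction n; intros A HA.
  - exists 0. split; [lra|]. intros x. rewrite (vec0_eq x), (lin_scal A HA), N1_scal.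
    rewrite Rabs_R0. pose proof (N1_nonneg (A x)). nra.
  - set (A' := fun y : Vec n => A (vcons 0 y)).
    assert (HA' : is_linear A').
    { intros x y a b. unfold A'. rewrite vcons_lin. apply HA. }
    destruct (IHn A' HA') as [M' [HM' HB']].
    exists (N1 (A (vcons 1 (vzero n))) + M'). split.
    { pose proof (N1_nonneg (A (vcons 1 (vzero n)))). lra. }
    intros x. rewrite (vec_decomp x) at 1. rewrite (lin_add A HA), (lin_scal A HA).
    eapply Rle_trans; [apply N1_add|]. rewrite N1_scal. fold (A' (fun i => x (Fin.FS i))).
    specialize (HB' (fun i => x (Fin.FS i))). rewrite N1_S.
    pose proof (N1_nonneg (A (vcons 1 (vzero n)))). pose proof (Rabs_pos (x Fin.F1)).
    pose proof (N1_nonneg (fun i => x (Fin.FS i))). nra.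
Qed.

Definition bil {n p m} (B : Vec n -> Vec p -> Vec m) : Prop :=
  (forall u, is_linear (fun h => B h u)) /\ (forall h, is_linear (B h)).

Lemma bil_bound n p m (B : Vec n -> Vec p -> Vec m) : bil B ->
  exists M, 0 <= M /\ forall x y, N1 (B x y) <= M * N1 x * N1 y.
Proof.
  revert B; induction n; intros B [HB1 HB2].
  - exists 0. split; [lra|]. intros x y. rewrite (vec0_eq x).
    rewrite (lin_scal (fun h => B h y) (HB1 y)), N1_scal.
    rewrite Rabs_R0. pose proof (N1_nonneg (B x y)). nra.
  - set (B' := fun x (y : Vec p) => B (vcons 0 x) y).
    assert (HB' : bil B').
    { split.
      - intros u x y a b. unfold B'. rewrite vcons_lin. apply (HB1 u).
      - intros h. unfold B'. apply HB2. }
    destruct (IHn B' HB') as [M' [HM' HM'b]].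
    destruct (lin_bound p m (B (vcons 1 (vzero n))) (HB2 _)) as [M1 [HM1 HM1b]].
    exists (M1 + M'). split; [lra|].
    intros x y. rewrite (vec_decomp x) at 1.
    rewrite (lin_add (fun h => B h y) (HB1 y)), (lin_scal (fun h => B h y) (HB1 y)).
    eapply Rle_trans; [apply N1_add|]. rewrite N1_scal.
    specialize (HM'b (fun i => x (Fin.FS i)) y). specialize (HM1b y). unfold B' in HM'b.
    rewrite N1_S.
    pose proof (N1_nonneg y). pose proof (Rabs_pos (x Fin.F1)).
    pose proof (N1_nonneg (fun i => x (Fin.FS i))).
    pose proof (N1_nonneg (B (vcons 1 (vzero n)) y)).
    assert (Rabs (x Fin.F1) * N1 (B (vcons 1 (vzero n)) y) <= Rabs (x Fin.F1) * (M1 * N1 y))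
      by (apply Rmult_le_compat_l; auto).
    assert (0 <= M1 * N1 (fun i => x (Fin.FS i)) * N1 y) by (repeat apply Rmult_le_pos; auto).
    assert (0 <= M' * Rabs (x Fin.F1) * N1 y) by (repeat apply Rmult_le_pos; auto).
    nra.
Qed.

Module TaylorM.
Import Coquelicot.Coquelicot.

Lemma vnorm_sub_self {n} (z : Vec n) : vnorm (vsub z z) = 0.
Proof.
  unfold vnorm, vsub. rewrite (fsum_ext n _ (fun _ => 0)) by (intros; ring).
  rewrite fsum_const, Rmult_0_r. apply sqrt_0.
Qed.

Lemma deriv_G n m (G : Vec n -> Vec m) (DGz : Vec n -> Vec m) zbar h s i :
  frechet_deriv G DGz (vadd zbar (vscal s h)) ->
  derivable_pt_lim (fun u => G (vadd zbar (vscal u h)) i) s (DGz h i).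
Proof.
  intros [HL HF] eps Heps.
  pose proof (vnorm_nonneg h) as Hh.
  set (c := vnorm h + 1).
  assert (Hc : 0 < c) by (unfold c; lra).
  destruct (HF (eps / (2 * c))) as [dF [HdF HdF']].
  { apply Rdiv_lt_0_compat; lra. }
  assert (Hpos : 0 < dF / c) by (apply Rdiv_lt_0_compat; lra).
  exists (mkposreal _ Hpos). intros u Hu0 Hu. simpl in Hu.
  replace (vadd zbar (vscal (s + u) h)) with (vadd (vadd zbar (vscal s h)) (vscal u h))
    by (apply vec_ext; intro; unfold vadd, vscal; ring).
  assert (Hn : vnorm (vscal u h) < dF).
  { rewrite vnorm_scal. pose proof (Rabs_pos u).
    apply (Rmult_lt_compat_r c) in Hu; [|lra]. unfold Rdiv in Hu.
    rewrite Rmult_assoc, Rinv_l, Rmult_1_r in Hu by lra.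
    unfold c in *. nra. }
  specialize (HdF' _ Hn). rewrite (lin_scal _ HL) in HdF'.
  assert (Hco : Rabs (G (vadd (vadd zbar (vscal s h)) (vscal u h)) i
       - G (vadd zbar (vscal s h)) i - u * DGz h i) <= vnorm (vsub (vsub (G (vadd (vadd zbar (vscal s h)) (vscal u h)))
       (G (vadd zbar (vscal s h)))) (vscal u (DGz h))))
    by exact (coord_le_vnorm (vsub (vsub (G (vadd (vadd zbar (vscal s h)) (vscal u h)))
       (G (vadd zbar (vscal s h)))) (vscal u (DGz h))) i).
  rewrite vnorm_scal in HdF'.
  set (a := G (vadd (vadd zbar (vscal s h)) (vscal u h)) i - G (vadd zbar (vscal s h)) i) in *.
  assert (E : a / u - DGz h i = (a - u * DGz h i) / u) by (field; auto).
  rewrite E. unfold Rdiv. rewrite Rabs_mult, Rabs_inv.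
  assert (Hau : 0 < Rabs u) by (apply Rabs_pos_lt; auto).
  apply (Rmult_lt_reg_r (Rabs u)); auto. rewrite Rmult_assoc, Rinv_l, Rmult_1_r by lra.
  eapply Rle_lt_trans; [apply (Rle_trans _ _ _ Hco HdF')|].
  assert (eps / (2 * c) * vnorm h < eps).
  { unfold Rdiv. apply (Rmult_lt_reg_r (2 * c)); [lra|].
    rewrite !Rmult_assoc. rewrite (Rmult_comm (vnorm h)).
    rewrite <- (Rmult_assoc (/ (2*c))), Rinv_l, Rmult_1_l by lra. unfold c; nra. }
  nra.
Qed.

Lemma taylor n m (G : Vec n -> Vec m) DG D2G zbar : C2_around G DG D2G zbar ->
  forall eps, 0 < eps -> exists delta, 0 < delta /\ forall h, N1 h < delta ->
   N1 (vsub (vsub (G (vadd zbar h)) (G zbar))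
         (vadd (DG zbar h) (vscal (1/2) (D2G zbar h h)))) <= eps * N1 h ^ 2.
Proof.
  intros [r [Hr HC]] eps Heps.
  destruct (HC zbar) as [[HL0 _] [[[HB1 HB2] HF2] _]]; [rewrite vnorm_sub_self; auto|].
  set (e' := eps / (INR m + 1)).
  assert (He' : 0 < e') by (unfold e'; apply Rdiv_lt_0_compat; [auto| pose proof (pos_INR m); lra]).
  destruct (HF2 e' He') as [d2 [Hd2 Hd2']].
  exists (Rmin r d2). split; [apply Rmin_pos; auto|].
  intros h Hh.
  pose proof (vnorm_le_N1 h) as Hvh. pose proof (vnorm_nonneg h) as Hvh0.
  assert (Hr' : vnorm h < r) by (pose proof (Rmin_l r d2); lra).
  assert (Hd2h : vnorm h < d2) by (pose proof (Rmin_r r d2); lra).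
  assert (Hin : forall s, 0 <= s <= 1 -> vnorm (vsub (vadd zbar (vscal s h)) zbar) < r).
  { intros s Hs. replace (vsub (vadd zbar (vscal s h)) zbar) with (vscal s h)
      by (apply vec_ext; intro; unfold vsub, vadd, vscal; ring).
    rewrite vnorm_scal, Rabs_right by lra. nra. }
  assert (Hcoord : forall i, Rabs ((vsub (vsub (G (vadd zbar h)) (G zbar))
         (vadd (DG zbar h) (vscal (1/2) (D2G zbar h h)))) i) <= e' * vnorm h ^ 2).
  { intros i.
    set (phi := fun s => G (vadd zbar (vscal s h)) i - (s * DG zbar h i + s * s / 2 * D2G zbar h h i)).
    set (dphi := fun s => DG (vadd zbar (vscal s h)) h i - (DG zbar h i + s * D2G zbar h h i)).
    assert (Hd : forall s, 0 <= s <= 1 -> derivable_pt_lim phi s (dphi s)).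
    { intros s Hs. apply is_derive_Reals. unfold phi, dphi.
      apply (is_derive_minus (fun s => G (vadd zbar (vscal s h)) i)
               (fun s => s * DG zbar h i + s * s / 2 * D2G zbar h h i)).
      - apply is_derive_Reals. apply deriv_G. apply (HC _ (Hin s Hs)).
      - auto_derive; auto. field. }
    destruct (MVT_gen phi 0 1 dphi) as [c [Hc Hmvt]].
    { rewrite Rmin_left, Rmax_right by lra. intros x Hx. apply is_derive_Reals, Hd; lra. }
    { rewrite Rmin_left, Rmax_right by lra. intros x Hx.
      apply (derivable_continuous_pt phi x (exist _ (dphi x) (Hd x Hx))). }
    rewrite Rmin_left, Rmax_right in Hc by lra.
    assert (E1 : (vsub (vsub (G (vadd zbar h)) (G zbar))
         (vadd (DG zbar h) (vscal (1/2) (D2G zbar h h)))) i = phi 1 - phi 0).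
    { unfold phi. replace (vadd zbar (vscal 1 h)) with (vadd zbar h)
        by (apply vec_ext; intro; unfold vadd, vscal; ring).
      replace (vadd zbar (vscal 0 h)) with zbar
        by (apply vec_ext; intro; unfold vadd, vscal; ring).
      unfold vsub, vadd, vscal. field. }
    rewrite E1, Hmvt, Rminus_0_r, Rmult_1_r.
    assert (Hch : vnorm (vscal c h) < d2) by (rewrite vnorm_scal, Rabs_right by lra; nra).
    specialize (Hd2' _ Hch h).
    rewrite (lin_scal (fun x => D2G zbar x h) (HB1 h)) in Hd2'.
    assert (Hco : Rabs (DG (vadd zbar (vscal c h)) h i - DG zbar h i - c * D2G zbar h h i)
      <= vnorm (vsub (vsub (DG (vadd zbar (vscal c h)) h) (DG zbar h))
                  (vscal c (D2G zbar h h))))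
      by exact (coord_le_vnorm (vsub (vsub (DG (vadd zbar (vscal c h)) h) (DG zbar h))
                  (vscal c (D2G zbar h h))) i).
    rewrite vnorm_scal, Rabs_right in Hd2' by lra.
    unfold dphi. replace (DG (vadd zbar (vscal c h)) h i - (DG zbar h i + c * D2G zbar h h i))
      with (DG (vadd zbar (vscal c h)) h i - DG zbar h i - c * D2G zbar h h i) by ring.
    eapply Rle_trans; [apply (Rle_trans _ _ _ Hco Hd2')|].
    assert (c * vnorm h * vnorm h <= vnorm h * vnorm h).
    { assert (0 <= vnorm h * vnorm h) by nra. nra. }
    simpl. rewrite Rmult_1_r. rewrite Rmult_assoc. apply Rmult_le_compat_l; lra. }
  unfold N1 at 1. eapply Rle_trans; [apply fsum_le; apply Hcoord|].
  rewrite fsum_const.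
  assert (INR m * e' <= eps).
  { unfold e'. pose proof (pos_INR m). unfold Rdiv.
    apply (Rmult_le_reg_r (INR m + 1)); [lra|].
    rewrite Rmult_assoc, (Rmult_assoc eps), Rinv_l, Rmult_1_r by lra. nra. }
  assert (vnorm h ^ 2 <= N1 h ^ 2) by (simpl; nra).
  pose proof (pos_INR m).
  assert (0 <= vnorm h ^2) by (simpl; nra).
  nra.
Qed.

End TaylorM.
Import TaylorM.

Lemma glb_exists (S : R -> Prop) : (exists r, S r) -> (forall r, S r -> 0 <= r) -> exists d, is_glb S d.
Proof.
  intros [r0 Hr0] Hpos.
  destruct (completeness (fun x => S (-x))) as [l [Hl1 Hl2]].
  - exists 0. intros x Hx. specialize (Hpos _ Hx). lra.
  - exists (-r0). rewrite Ropp_involutive; auto.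
  - exists (-l). split.
    + intros r Hr. assert (-r <= l) by (apply Hl1; rewrite Ropp_involutive; auto). lra.
    + intros b Hb. assert (l <= -b).
      { apply Hl2. intros x Hx. specialize (Hb _ Hx). lra. }
      lra.
Qed.

Lemma glb_approx (S : R -> Prop) d eta : is_glb S d -> 0 < eta -> exists r, S r /\ r < d + eta.
Proof.
  intros [H1 H2] He. apply NNPP. intros Hn.
  assert (d + eta <= d).
  { apply H2. intros r Hr. apply Rnot_lt_le. intros Hlt. apply Hn. exists r; auto. }
  lra.
Qed.

Lemma dist_exists {n} (S : Vec n -> Prop) x : (exists s, S s) -> exists d, is_dist S x d.
Proof.
  intros [s Hs]. apply glb_exists.
  - exists (vnorm (vsub x s)), s; auto.
  - intros r [s' [_ ->]]. apply vnorm_nonneg.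
Qed.

Lemma incr_ge (phi : nat -> nat) : (forall k, (phi k < phi (S k))%nat) -> forall k, (k <= phi k)%nat.
Proof. intros H k; induction k; [lia|]. specialize (H k). lia. Qed.

Lemma bw_real (u : nat -> R) M : (forall k, Rabs (u k) <= M) ->
  exists phi l, (forall k, (phi k < phi (S k))%nat) /\ Un_cv (fun k => u (phi k)) l.
Proof.
  intros HM.
  destruct (Bolzano_Weierstrass u (fun c => -M <= c <= M) (compact_P3 (-M) M)) as [l Hl].
  { intros k. specialize (HM k). 
    unfold Rabs in HM. destruct (Rcase_abs (u k)); lra. }
  assert (Hc : forall N k, exists p, (N <= p)%nat /\ Rabs (u p - l) < / (INR k + 1)).
  { intros N k. assert (Hp : 0 < / (INR k + 1)) by (apply Rinv_0_lt_compat; pose proof (pos_INR k); lra).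
    destruct (Hl (fun y => Rabs (y - l) < / (INR k + 1)) N) as [p [Hp1 Hp2]].
    - exists (mkposreal _ Hp). intros y Hy. unfold disc in Hy. simpl in Hy. auto.
    - exists p; auto. }
  set (f := fun N k => proj1_sig (constructive_indefinite_description _ (Hc N k))).
  assert (Hf : forall N k, (N <= f N k)%nat /\ Rabs (u (f N k) - l) < / (INR k + 1)).
  { intros N k. unfold f. apply proj2_sig. }
  set (phi := fix phi k := match k with O => f O O | S k' => f (S (phi k')) (S k') end).
  exists phi, l. split.
  - intros k. simpl. destruct (Hf (S (phi k)) (S k)). lia.
  - assert (Hb : forall k, Rabs (u (phi k) - l) < / (INR k + 1)).
    { intros [|k]; simpl; [apply Hf| apply Hf]. }
    intros eps He. destruct (archimed_cor1 eps He) as [N [HN HN0]].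
    exists N. intros k Hk. unfold R_dist. eapply Rlt_trans; [apply Hb|].
    eapply Rle_lt_trans; [|apply HN].
    apply Rinv_le_contravar. { apply lt_0_INR; auto. }
    apply le_INR in Hk. lra.
Qed.

Lemma bw_vec n (u : nat -> Vec n) M : (forall k, N1 (u k) <= M) ->
  exists phi l, (forall k, (phi k < phi (S k))%nat) /\
    (forall eps, 0 < eps -> exists N, forall k, (k >= N)%nat -> N1 (vsub (u (phi k)) l) < eps).
Proof.
  revert u; induction n; intros u HM.
  - exists (fun k => k), (vzero 0). split; [intros; lia|].
    intros eps He. exists O. intros k _. unfold N1. simpl. auto.
  - destruct (bw_real (fun k => u k Fin.F1) M) as [phi1 [l1 [Hp1 Hc1]]].
    { intros k. eapply Rle_trans; [|apply (HM k)]. rewrite N1_S.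
      pose proof (N1_nonneg (fun i => u k (Fin.FS i))). lra. }
    destruct (IHn (fun k => fun i => u (phi1 k) (Fin.FS i))) as [phi2 [l2 [Hp2 Hc2]]].
    { intros k. eapply Rle_trans; [|apply (HM (phi1 k))]. rewrite (N1_S (u (phi1 k))).
      pose proof (Rabs_pos (u (phi1 k) Fin.F1)). lra. }
    exists (fun k => phi1 (phi2 k)), (vcons l1 l2). split.
    + intros k. specialize (Hp2 k).
      assert (forall a b, (a < b)%nat -> (phi1 a < phi1 b)%nat).
      { intros a b Hab. induction Hab; [apply Hp1|]. specialize (Hp1 m). lia. }
      auto.
    + intros eps He. destruct (Hc1 (eps/2)) as [N1' HN1]; [lra|].
      destruct (Hc2 (eps/2)) as [N2 HN2]; [lra|].
      exists (Nat.max N1' N2). intros k Hk.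
      rewrite N1_S.
      pose proof (incr_ge phi2 Hp2 k).
      specialize (HN1 (phi2 k) ltac:(lia)). specialize (HN2 k ltac:(lia)).
      unfold R_dist in HN1. unfold vsub at 1. unfold vcons at 1. simpl.
      change (N1 (fun i => vsub (u (phi1 (phi2 k))) (vcons l1 l2) (Fin.FS i)))
        with (N1 (vsub (fun i => u (phi1 (phi2 k)) (Fin.FS i)) l2)).
      lra.
Qed.

Definition Rem {n m} (G : Vec n -> Vec m) A B zbar (h : Vec n) : Vec m :=
  vsub (vsub (G (vadd zbar h)) (G zbar)) (vadd (A h) (vscal (1/2) (B h h))).

Definition tail {n m} (B : Vec n -> Vec n -> Vec m) T v u : Vec m :=
  vadd (vscal (T^3/2) (vadd (B v u) (B u v))) (vscal (T^4/2) (B u u)).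

Definition hh {n} T (v u : Vec n) : Vec n := vadd (vscal T v) (vscal (T^2) u).

Lemma bil_l {n p m} (B : Vec n -> Vec p -> Vec m) : bil B ->
  forall a c x y u, B (vadd (vscal a x) (vscal c y)) u = vadd (vscal a (B x u)) (vscal c (B y u)).
Proof. intros [H1 H2] a c x y u. exact (H1 u x y a c). Qed.

Lemma bil_r {n p m} (B : Vec n -> Vec p -> Vec m) : bil B ->
  forall a c x y u, B u (vadd (vscal a x) (vscal c y)) = vadd (vscal a (B u x)) (vscal c (B u y)).
Proof. intros [H1 H2] a c x y u. exact (H2 u x y a c). Qed.

Lemma expand {n m} (G : Vec n -> Vec m) A B zbar : is_linear A -> bil B -> G zbar = vzero m ->
  forall T v u, G (vadd zbar (hh T v u)) =
    vadd (Rem G A B zbar (hh T v u))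
      (vadd (vscal T (A v)) (vadd (vscal (T^2) (vadd (A u) (vscal (1/2) (B v v)))) (tail B T v u))).
Proof.
  intros HA HB HG T v u. unfold Rem, tail, hh. rewrite HG.
  rewrite HA, (bil_l B HB), !(bil_r B HB).
  apply vec_ext; intro i. unfold vadd, vsub, vscal, vzero. field.
Qed.

Lemma N1_hh {n} T (v u : Vec n) : 0 <= T <= 1 -> N1 (hh T v u) <= T * (N1 v + N1 u).
Proof.
  intros HT. unfold hh. eapply Rle_trans; [apply N1_add|]. rewrite !N1_scal.
  rewrite Rabs_right by lra. rewrite Rabs_right by (apply Rle_ge; apply pow_le; lra).
  pose proof (N1_nonneg u). simpl.
  assert (T * (T * 1) * N1 u <= T * N1 u).
  { rewrite Rmult_1_r. apply Rmult_le_compat_r; auto. nra. }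
  lra.
Qed.

Lemma N1_tail {n m} (B : Vec n -> Vec n -> Vec m) T v u : 0 <= T <= 1 ->
  N1 (tail B T v u) <= T^3 * (N1 (B v u) + N1 (B u v) + N1 (B u u)).
Proof.
  intros HT. unfold tail. eapply Rle_trans; [apply N1_add|]. rewrite !N1_scal.
  rewrite !Rabs_right by (apply Rle_ge; unfold Rdiv; apply Rmult_le_pos; [apply pow_le; lra| lra]).
  pose proof (N1_add (B v u) (B u v)).
  pose proof (N1_nonneg (B v u)). pose proof (N1_nonneg (B u v)). pose proof (N1_nonneg (B u u)).
  assert (0 <= T^3) by (apply pow_le; lra).
  assert (T^4 <= T^3) by (simpl; nra).
  assert (T ^ 3 / 2 * N1 (vadd (B v u) (B u v)) <= T^3/2 * (N1 (B v u) + N1 (B u v)))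
    by (apply Rmult_le_compat_l; lra).
  assert (T ^ 4 / 2 * N1 (B u u) <= T^3/2 * N1 (B u u))
    by (apply Rmult_le_compat_r; lra).
  nra.
Qed.

Lemma le_eps a b D : 0 <= D -> (forall th, 0 < th <= 1 -> a <= b + th * D) -> a <= b.
Proof.
  intros HD H. apply Rnot_lt_le. intros Hlt.
  set (th := Rmin 1 ((a - b) / (2 * (D + 1)))).
  assert (Hth : 0 < th <= 1).
  { unfold th. split; [apply Rmin_pos; [lra| apply Rdiv_lt_0_compat; lra]| apply Rmin_l]. }
  specialize (H th Hth).
  assert (th * (2 * (D + 1)) <= a - b).
  { pose proof (Rmin_r 1 ((a - b) / (2 * (D + 1)))). fold th in H0.
    apply (Rmult_le_compat_r (2 * (D+1))) in H0; [|lra].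
    unfold Rdiv in H0. rewrite Rmult_assoc, Rinv_l, Rmult_1_r in H0 by lra. auto. }
  nra.
Qed.

Lemma choice_fun {T : Type} (P : nat -> T -> Prop) : (forall k, exists x, P k x) -> exists f, forall k, P k (f k).
Proof.
  intros H. exists (fun k => proj1_sig (constructive_indefinite_description _ (H k))).
  intros k. apply proj2_sig.
Qed.

Lemma vnorm_sub_sym {n} (x y : Vec n) : vnorm (vsub x y) = vnorm (vsub y x).
Proof. unfold vnorm, vsub. f_equal. apply fsum_ext; intros; ring. Qed.

Lemma N1_tri3 {n} (a b c : Vec n) : N1 (vsub a c) <= N1 (vsub a b) + N1 (vsub b c).
Proof.
  replace (vsub a c) with (vadd (vsub a b) (vsub b c)) by (apply vec_ext; intro; unfold vadd, vsub; ring).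
  apply N1_add.
Qed.

Lemma N1_le_sub {n} (x w : Vec n) : N1 x <= N1 (vsub x w) + N1 w.
Proof.
  replace x with (vadd (vsub x w) w) at 1 by (apply vec_ext; intro; unfold vadd, vsub; ring).
  apply N1_add.
Qed.

Theorem proposition3p1 (n m : nat) (K : Vec m -> Prop) (G : Vec n -> Vec m)
  (DG : Vec n -> Vec n -> Vec m) (D2G : Vec n -> Vec n -> Vec n -> Vec m)
  (zbar : Vec n) :
  closed_convex_cone K ->
  C2_around G DG D2G zbar ->
  G zbar = vzero m ->
  MSCQ G K zbar ->
  forall v : Vec n, K (DG zbar v) ->
  exists kappa, 0 < kappa /\
    forall (w : Vec n) (q : Vec m),
      tangent_cone K (DG zbar v)
        (vadd (vadd (DG zbar w) (vscal (1/2) (D2G zbar v v))) q) ->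
      exists wt : Vec n,
        tangent_cone K (DG zbar v) (vadd (DG zbar wt) (vscal (1/2) (D2G zbar v v))) /\
        vnorm (vsub wt w) <= kappa * vnorm q.
Proof.
  intros [_ [_ Hcone]] HC2 HG0 HMS v Hv.
  pose proof HC2 as [r [Hr HC]].
  destruct (HC zbar) as [[HLA _] [[HBil _] _]]; [rewrite vnorm_sub_self; auto|].
  assert (HB : bil (D2G zbar)) by exact HBil.
  destruct (lin_bound _ _ _ HLA) as [MA [HMA HMAb]].
  destruct (bil_bound _ _ _ _ HB) as [MB [HMB HMBb]].
  destruct HMS as [kp [Hkp [dM [HdM HMS]]]].
  assert (HK0 : forall x, K x -> K (vzero m)).
  { intros x Hx. replace (vzero m) with (vscal 0 x)
      by (apply vec_ext; intro; unfold vscal, vzero; ring). apply Hcone; auto; lra. }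
  assert (HKG0 : K (G zbar)) by (rewrite HG0; eapply HK0; eauto).
  pose proof (pos_INR n) as Hn0. pose proof (pos_INR m) as Hm0.
  exists (INR n * kp * INR m + 1). split.
  { assert (0 <= INR n * kp * INR m) by (repeat apply Rmult_le_pos; auto). lra. }
  intros w q [t [xi [Ht [Htc [Hxi HKx]]]]].
  set (A := DG zbar) in *. set (B := D2G zbar) in *.
  set (b := vscal (1/2) (B v v)) in *.
  set (X := vadd (vadd (A w) b) q) in *.
  set (z := fun k => vadd zbar (hh (t k) v w)).
  set (y := fun k => vscal (t k) (vadd (A v) (vscal (t k) (xi k)))).
  assert (Hy : forall k, K (y k)) by (intros k; apply Hcone; [apply HKx| left; apply Ht]).
  assert (Hch : forall k, exists z', K (G z') /\ (vnorm (vsub (z k) zbar) < dM ->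
       vnorm (vsub (z k) z') <= kp * vnorm (vsub (G (z k)) (y k)) + t k ^ 3)).
  { intros k. destruct (Rlt_dec (vnorm (vsub (z k) zbar)) dM) as [Hlt|Hge].
    - destruct (dist_exists (fun z' => K (G z')) (z k)) as [d1 Hd1]; [exists zbar; auto|].
      destruct (dist_exists K (G (z k))) as [d2 Hd2]; [exists (y k); auto|].
      pose proof (HMS _ Hlt d1 d2 Hd1 Hd2) as H12.
      assert (d2 <= vnorm (vsub (G (z k)) (y k))) by (apply (proj1 Hd2); exists (y k); auto).
      destruct (glb_approx _ _ (t k ^ 3) Hd1) as [r' [[s [Hs Hr's]] Hr']].
      { apply pow_lt, Ht. }
      exists s. split; auto. intros _. subst r'.
      assert (kp * d2 <= kp * vnorm (vsub (G (z k)) (y k))) by (apply Rmult_le_compat_l; auto).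
      lra.
    - exists zbar. split; auto. intros; contradiction. }
  destruct (choice_fun _ Hch) as [zp Hzp].
  set (wp := fun k => vscal (/ (t k ^ 2)) (vsub (vsub (zp k) zbar) (vscal (t k) v))).
  assert (Hzpe : forall k, zp k = vadd zbar (hh (t k) v (wp k))).
  { intros k. pose proof (Ht k). apply vec_ext; intro i; unfold wp, hh, vadd, vsub, vscal.
    field. lra. }
  assert (Hwpw : forall k, vsub (wp k) w = vscal (/ (t k ^ 2)) (vsub (zp k) (z k))).
  { intros k. pose proof (Ht k). apply vec_ext; intro i; unfold wp, z, hh, vadd, vsub, vscal.
    field. lra. }
  assert (HN1v := N1_nonneg v). assert (HN1w := N1_nonneg w). assert (HN1q := N1_nonneg q).
  set (Cv := N1 v + N1 w + 1).
  assert (Hcv : 0 < Cv) by (unfold Cv; lra).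
  set (C0 := Cv ^ 2 + 1 + (N1 (B v w) + N1 (B w v) + N1 (B w w))).
  assert (HC0 : 0 <= C0).
  { unfold C0. pose proof (N1_nonneg (B v w)). pose proof (N1_nonneg (B w v)).
    pose proof (N1_nonneg (B w w)). assert (0 <= Cv ^ 2) by (simpl; nra). lra. }
  set (D1 := INR n * (kp * C0 + 1)).
  assert (HD1 : 0 <= D1).
  { unfold D1. apply Rmult_le_pos; auto. assert (0 <= kp * C0) by (apply Rmult_le_pos; auto). lra. }
  assert (Bound1 : forall th, 0 < th <= 1 -> exists N, forall k, (k >= N)%nat ->
            N1 (vsub (wp k) w) <= INR n * kp * N1 q + th * D1).
  { intros th Hth.
    destruct (taylor n m G DG D2G zbar HC2 th (proj1 Hth)) as [dT [HdT HTay]].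
    set (tau := Rmin th (Rmin (dT / Cv) (dM / Cv))).
    assert (Htau : 0 < tau).
    { unfold tau. repeat apply Rmin_pos; try apply Rdiv_lt_0_compat; lra. }
    destruct (Htc tau Htau) as [Na HNa].
    destruct (Hxi (th / (INR m + 1))) as [Nb HNb]; [apply Rdiv_lt_0_compat; lra|].
    exists (Nat.max Na Nb). intros k Hk.
    specialize (HNa k ltac:(lia)). specialize (HNb k ltac:(lia)).
    pose proof (Ht k) as HT0.
    unfold R_dist in HNa. rewrite Rminus_0_r, Rabs_right in HNa by lra.
    assert (HT1 : t k <= th) by (pose proof (Rmin_l th (Rmin (dT / Cv) (dM / Cv))); fold tau in H; lra).
    assert (HTdT : t k * Cv < dT).
    { assert (t k < dT / Cv).
      { pose proof (Rmin_r th (Rmin (dT / Cv) (dM / Cv))). pose proof (Rmin_l (dT / Cv) (dM / Cv)).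
        fold tau in H. lra. }
      apply (Rmult_lt_compat_r Cv) in H; auto. unfold Rdiv in H.
      rewrite Rmult_assoc, Rinv_l, Rmult_1_r in H by lra. auto. }
    assert (HTdM : t k * Cv < dM).
    { assert (t k < dM / Cv).
      { pose proof (Rmin_r th (Rmin (dT / Cv) (dM / Cv))). pose proof (Rmin_r (dT / Cv) (dM / Cv)).
        fold tau in H. lra. }
      apply (Rmult_lt_compat_r Cv) in H; auto. unfold Rdiv in H.
      rewrite Rmult_assoc, Rinv_l, Rmult_1_r in H by lra. auto. }
    assert (Hh : N1 (hh (t k) v w) <= t k * Cv).
    { eapply Rle_trans; [apply N1_hh; lra|]. unfold Cv. nra. }
    assert (Hzk : vnorm (vsub (z k) zbar) < dM).
    { replace (vsub (z k) zbar) with (hh (t k) v w)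
        by (apply vec_ext; intro; unfold z, hh, vsub, vadd, vscal; ring).
      pose proof (vnorm_le_N1 (hh (t k) v w)). lra. }
    destruct (Hzp k) as [_ Hzp2]. specialize (Hzp2 Hzk).
    assert (E : vsub (G (z k)) (y k) = vadd (Rem G A B zbar (hh (t k) v w))
        (vadd (vscal (t k ^ 2) (vsub (vsub X (xi k)) q)) (tail B (t k) v w))).
    { unfold z. rewrite (expand G A B zbar HLA HB HG0). apply vec_ext; intro i.
      unfold y, X, b, vadd, vsub, vscal. ring. }
    assert (HRem : N1 (Rem G A B zbar (hh (t k) v w)) <= th * (t k * Cv) ^ 2).
    { eapply Rle_trans; [apply HTay; lra|]. apply Rmult_le_compat_l; [lra|].
      apply pow_incr. split; [apply N1_nonneg| auto]. }
    assert (HXi : N1 (vsub X (xi k)) <= th).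
    { rewrite N1_sub_sym. eapply Rle_trans; [apply N1_le_vnorm|].
      pose proof (vnorm_nonneg (vsub (xi k) X)).
      assert (INR m * vnorm (vsub (xi k) X) <= INR m * (th / (INR m + 1)))
        by (apply Rmult_le_compat_l; lra).
      assert (INR m * (th / (INR m + 1)) <= th).
      { unfold Rdiv. apply (Rmult_le_reg_r (INR m + 1)); [lra|].
        rewrite Rmult_assoc, (Rmult_assoc th), Rinv_l, Rmult_1_r by lra. nra. }
      lra. }
    assert (Htl : N1 (tail B (t k) v w) <= t k ^ 3 * (N1 (B v w) + N1 (B w v) + N1 (B w w)))
      by (apply N1_tail; lra).
    assert (HGy : N1 (vsub (G (z k)) (y k)) <= t k ^ 2 * (N1 q + th * C0)).
    { rewrite E. eapply Rle_trans; [apply N1_add|].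
      eapply Rle_trans; [apply Rplus_le_compat_l; apply N1_add|].
      rewrite N1_scal, Rabs_right by (apply Rle_ge, pow_le; lra).
      pose proof (N1_sub (vsub X (xi k)) q).
      set (cB := N1 (B v w) + N1 (B w v) + N1 (B w w)) in *.
      assert (0 <= cB) by (unfold cB; pose proof (N1_nonneg (B v w)); pose proof (N1_nonneg (B w v));
        pose proof (N1_nonneg (B w w)); lra).
      assert (HT2 : 0 < t k ^ 2) by (apply pow_lt; lra).
      assert (t k ^ 3 * cB <= t k ^ 2 * (th * cB)).
      { replace (t k ^ 3) with (t k ^ 2 * t k) by ring. rewrite Rmult_assoc.
        apply Rmult_le_compat_l; [lra|]. apply Rmult_le_compat_r; lra. }
      assert (t k ^ 2 * N1 (vsub (vsub X (xi k)) q) <= t k ^ 2 * (th + N1 q))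
        by (apply Rmult_le_compat_l; lra).
      replace (th * (t k * Cv) ^ 2) with (t k ^ 2 * (th * Cv ^ 2)) in HRem by ring.
      unfold C0. fold cB. nra. }
    rewrite Hwpw. eapply Rle_trans; [apply N1_le_vnorm|].
    rewrite vnorm_scal, vnorm_sub_sym.
    assert (HT2 : 0 < t k ^ 2) by (apply pow_lt; lra).
    rewrite Rabs_right by (apply Rle_ge; left; apply Rinv_0_lt_compat; auto).
    assert (Hz2 : vnorm (vsub (z k) (zp k)) <= t k ^ 2 * (kp * (N1 q + th * C0) + t k)).
    { eapply Rle_trans; [apply Hzp2|].
      pose proof (vnorm_le_N1 (vsub (G (z k)) (y k))).
      assert (kp * vnorm (vsub (G (z k)) (y k)) <= kp * (t k ^ 2 * (N1 q + th * C0)))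
        by (apply Rmult_le_compat_l; lra).
      replace (t k ^ 3) with (t k ^ 2 * t k) by ring. nra. }
    assert (/ t k ^ 2 * vnorm (vsub (z k) (zp k)) <= kp * (N1 q + th * C0) + t k).
    { apply (Rmult_le_reg_l (t k ^ 2)); auto. rewrite <- Rmult_assoc, Rinv_r, Rmult_1_l by lra. auto. }
    assert (INR n * (/ t k ^ 2 * vnorm (vsub (z k) (zp k))) <= INR n * (kp * (N1 q + th * C0) + t k))
      by (apply Rmult_le_compat_l; auto).
    assert (INR n * t k <= INR n * th) by (apply Rmult_le_compat_l; auto).
    unfold D1. nra. }
  destruct (Bound1 1) as [N0 HN0]; [lra|].
  set (Mw := N1 w + (INR n * kp * N1 q + 1 * D1)).
  assert (HMw0 : 0 <= Mw).
  { unfold Mw. assert (0 <= INR n * kp * N1 q) by (repeat apply Rmult_le_pos; auto). lra. }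
  assert (HMw : forall j, N1 (wp (N0 + j)%nat) <= Mw).
  { intros j. eapply Rle_trans; [apply (N1_le_sub _ w)|].
    specialize (HN0 (N0 + j)%nat ltac:(lia)). unfold Mw; lra. }
  destruct (bw_vec n (fun j => wp (N0 + j)%nat) Mw HMw) as [phi [wt [Hphi Hconv]]].
  set (psi := fun j => (N0 + phi j)%nat).
  assert (Hpsi : forall j, (j <= psi j)%nat)
    by (intros j; pose proof (incr_ge phi Hphi j); unfold psi; lia).
  exists wt. split.
  - set (W := fun j => vscal (/ (t (psi j) ^ 2)) (vsub (G (zp (psi j))) (vscal (t (psi j)) (A v)))).
    exists (fun j => t (psi j)), W.
    split; [intros; apply Ht|].
    split.
    { intros eps He. destruct (Htc eps He) as [N HN]. exists N. intros j Hj. apply HN.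
      specialize (Hpsi j). lia. }
    split.
    + intros eps He.
      set (Cw := N1 v + Mw + 1).
      assert (HCw : 0 < Cw) by (unfold Cw; lra).
      set (Cu := MB * (2 * (N1 v * Mw) + Mw * Mw)).
      assert (HCu : 0 <= Cu) by (unfold Cu; apply Rmult_le_pos; auto; nra).
      set (D2 := Cw ^ 2 + 1 + Cu).
      assert (HD2 : 0 <= D2) by (unfold D2; assert (0 <= Cw ^ 2) by (simpl; nra); lra).
      set (th := Rmin 1 (eps / (2 * (D2 + 1)))).
      assert (Hth : 0 < th <= 1).
      { unfold th. split; [apply Rmin_pos; [lra| apply Rdiv_lt_0_compat; lra]| apply Rmin_l]. }
      assert (HthD : th * D2 <= eps / 2).
      { assert (th <= eps / (2 * (D2 + 1))) by apply Rmin_r.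
        apply (Rmult_le_compat_r (2 * (D2 + 1))) in H; [|lra].
        unfold Rdiv in H. rewrite Rmult_assoc, Rinv_l, Rmult_1_r in H by lra. nra. }
      destruct (taylor n m G DG D2G zbar HC2 th (proj1 Hth)) as [dT [HdT HTay]].
      set (tau := Rmin th (dT / Cw)).
      assert (Htau : 0 < tau).
      { unfold tau. apply Rmin_pos; [lra| apply Rdiv_lt_0_compat; lra]. }
      destruct (Htc tau Htau) as [Na HNa].
      destruct (Hconv (th / (MA + 1))) as [Nb HNb]; [apply Rdiv_lt_0_compat; lra|].
      exists (Nat.max Na Nb). intros j Hj.
      specialize (HNa (psi j) ltac:(specialize (Hpsi j); lia)). specialize (HNb j ltac:(lia)).
      simpl in HNb. fold (psi j) in HNb.
      pose proof (Ht (psi j)) as HT0.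
      unfold R_dist in HNa. rewrite Rminus_0_r, Rabs_right in HNa by lra.
      assert (HT1 : t (psi j) <= th) by (pose proof (Rmin_l th (dT / Cw)); fold tau in H; lra).
      assert (HTdT : t (psi j) * Cw < dT).
      { assert (t (psi j) < dT / Cw) by (pose proof (Rmin_r th (dT / Cw)); fold tau in H; lra).
        apply (Rmult_lt_compat_r Cw) in H; auto. unfold Rdiv in H.
        rewrite Rmult_assoc, Rinv_l, Rmult_1_r in H by lra. auto. }
      assert (Hu : N1 (wp (psi j)) <= Mw) by exact (HMw (phi j)).
      assert (HA : MA * N1 (vsub (wp (psi j)) wt) <= th).
      { assert (MA * N1 (vsub (wp (psi j)) wt) <= MA * (th / (MA + 1)))
          by (apply Rmult_le_compat_l; lra).
        assert (MA * (th / (MA + 1)) <= th).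
        { unfold Rdiv. apply (Rmult_le_reg_r (MA + 1)); [lra|].
          rewrite Rmult_assoc, (Rmult_assoc th), Rinv_l, Rmult_1_r by lra. nra. }
        lra. }
      set (T := t (psi j)) in *. set (u := wp (psi j)) in *.
      assert (HT2 : 0 < T ^ 2) by (apply pow_lt; lra).
      assert (E : vsub (W j) (vadd (A wt) b) =
        vadd (vscal (/ T ^ 2) (Rem G A B zbar (hh T v u)))
          (vadd (A (vsub u wt)) (vscal (/ T ^ 2) (tail B T v u)))).
      { unfold W. fold T. rewrite (Hzpe (psi j)). fold T u.
        rewrite (expand G A B zbar HLA HB HG0), (lin_sub A HLA).
        apply vec_ext; intro i. unfold b, vadd, vsub, vscal. field. lra. }
      assert (Hhh : N1 (hh T v u) <= T * Cw).
      { eapply Rle_trans; [apply N1_hh; lra|]. unfold Cw. nra. }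
      assert (HRem : N1 (Rem G A B zbar (hh T v u)) <= T ^ 2 * (th * Cw ^ 2)).
      { eapply Rle_trans; [apply HTay; lra|].
        replace (T ^ 2 * (th * Cw ^ 2)) with (th * (T * Cw) ^ 2) by ring.
        apply Rmult_le_compat_l; [lra|]. apply pow_incr. split; [apply N1_nonneg| auto]. }
      assert (Htl : N1 (tail B T v u) <= T ^ 2 * (T * Cu)).
      { eapply Rle_trans; [apply N1_tail; lra|].
        replace (T ^ 2 * (T * Cu)) with (T ^ 3 * Cu) by ring.
        apply Rmult_le_compat_l; [apply pow_le; lra|].
        pose proof (HMBb v u). pose proof (HMBb u v). pose proof (HMBb u u).
        pose proof (N1_nonneg u).
        assert (MB * N1 v * N1 u <= MB * N1 v * Mw)
          by (apply Rmult_le_compat_l; auto; apply Rmult_le_pos; auto).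
        assert (MB * N1 u * N1 v <= MB * Mw * N1 v)
          by (apply Rmult_le_compat_r; auto; apply Rmult_le_compat_l; auto).
        assert (MB * N1 u * N1 u <= MB * Mw * Mw).
        { rewrite !Rmult_assoc. apply Rmult_le_compat_l; auto. nra. }
        unfold Cu. nra. }
      assert (HAu : N1 (A (vsub u wt)) <= th) by (eapply Rle_trans; [apply HMAb| auto]).
      eapply Rle_lt_trans; [apply vnorm_le_N1|]. rewrite E.
      eapply Rle_lt_trans; [apply N1_add|].
      eapply Rle_lt_trans; [apply Rplus_le_compat_l; apply N1_add|].
      rewrite !N1_scal, Rabs_right by (apply Rle_ge; left; apply Rinv_0_lt_compat; auto).
      assert (/ T ^ 2 * N1 (Rem G A B zbar (hh T v u)) <= th * Cw ^ 2).
      { apply (Rmult_le_reg_l (T ^ 2)); auto. rewrite <- Rmult_assoc, Rinv_r, Rmult_1_l by lra. auto. }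
      assert (/ T ^ 2 * N1 (tail B T v u) <= T * Cu).
      { apply (Rmult_le_reg_l (T ^ 2)); auto. rewrite <- Rmult_assoc, Rinv_r, Rmult_1_l by lra. auto. }
      assert (T * Cu <= th * Cu) by (apply Rmult_le_compat_r; auto).
      unfold D2 in HthD. nra.
    + intros j. replace (vadd (A v) (vscal (t (psi j)) (W j))) with (vscal (/ t (psi j)) (G (zp (psi j)))).
      * apply Hcone; [apply Hzp| left; apply Rinv_0_lt_compat, Ht].
      * pose proof (Ht (psi j)). apply vec_ext; intro i; unfold W, vadd, vscal, vsub. field. lra.
  - assert (HF : N1 (vsub wt w) <= INR n * kp * N1 q).
    { apply (le_eps _ _ (D1 + 1)); [lra|]. intros th Hth.
      destruct (Bound1 th Hth) as [Nc HNc]. destruct (Hconv th (proj1 Hth)) as [Nd HNd].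
      specialize (HNd (Nat.max Nc Nd) ltac:(lia)).
      specialize (HNc (psi (Nat.max Nc Nd)) ltac:(specialize (Hpsi (Nat.max Nc Nd)); lia)).
      simpl in HNd. fold (psi (Nat.max Nc Nd)) in HNd.
      pose proof (N1_tri3 wt (wp (psi (Nat.max Nc Nd))) w).
      rewrite (N1_sub_sym wt (wp (psi (Nat.max Nc Nd)))) in H. lra. }
    eapply Rle_trans; [apply vnorm_le_N1|]. eapply Rle_trans; [apply HF|].
    pose proof (N1_le_vnorm q). pose proof (vnorm_nonneg q).
    assert (INR n * kp * N1 q <= INR n * kp * (INR m * vnorm q))
      by (apply Rmult_le_compat_l; auto; apply Rmult_le_pos; auto).
    nra.
Qed.
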